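(* Let $L$ be a $c$-lattice and $S$ a multiplicatively closed subset of $L$ (with $1\in S$, $0\notin S$). If $p\in L$ is an $S$-prime element, then its $S$-saturation $p_S$ is a prime element of $L$.
   Context: A multiplicative lattice is a complete lattice with a commutative, associative multiplication distributing over arbitrary joins, with $1$ as identity; $L_*$ is the set of compact elements. A $c$-lattice is a compactly generated multiplicative lattice with $1$ compact in which the product of two compact elements is compact. A multiplicatively closed subset is a nonempty $S\subseteq L_*$ closed under multiplication. The $S$-saturation of $a$ is $a_S=\bigvee\{x\in L\mid sx\le a\text{ for some }s\in S\}$. An element $p\ne1$ is prime if $ab\le p$ implies $a\le p$ or $b\le p$. A proper element $p$ with $t\not\le p$ for all $t\in S$ is $S$-prime if there exists $s\in S$ such that for all $a,b\in L$, $ab\le p$ implies $sa\le p$ or $sb\le p$. *)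

(* Defs.v *)
From Stdlib Require Import List.
Import ListNotations.

Record MultLattice := {
  car :> Type;
  le : car -> car -> Prop;
  sup : (car -> Prop) -> car;
  mul : car -> car -> car;
  le_refl : forall a, le a a;
  le_antisym : forall a b, le a b -> le b a -> a = b;
  le_trans : forall a b c, le a b -> le b c -> le a c;
  sup_ub : forall (A : car -> Prop) a, A a -> le a (sup A);
  sup_least : forall (A : car -> Prop) b, (forall a, A a -> le a b) -> le (sup A) b;
  mulC : forall a b, mul a b = mul b a;
  mulA : forall a b c, mul a (mul b c) = mul (mul a b) c;
  mul_sup : forall a (A : car -> Prop),
      mul a (sup A) = sup (fun y => exists x, A x /\ y = mul a x);
  mul1 : forall a, mul (sup (fun _ => True)) a = a
}.

Arguments le {L} : rename.
Arguments sup {L} : rename.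
Arguments mul {L} : rename.

Definition top (L : MultLattice) : L := sup (fun _ : L => True).
Definition bot (L : MultLattice) : L := sup (fun _ : L => False).

Definition compact {L : MultLattice} (x : L) : Prop :=
  forall A : L -> Prop, le x (sup A) ->
    exists l : list L, (forall y, In y l -> A y) /\ le x (sup (fun y => In y l)).

Definition compactly_generated (L : MultLattice) : Prop :=
  forall a : L, a = sup (fun x => compact x /\ le x a).

Definition c_lattice (L : MultLattice) : Prop :=
  compactly_generated L /\ compact (top L) /\
  (forall x y : L, compact x -> compact y -> compact (mul x y)).

Definition mult_closed {L : MultLattice} (S : L -> Prop) : Prop :=
  (exists s, S s) /\ (forall s, S s -> compact s) /\
  (forall s t, S s -> S t -> S (mul s t)).

Definition saturation {L : MultLattice} (S : L -> Prop) (a : L) : L :=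
  sup (fun x => exists s, S s /\ le (mul s x) a).

Definition prime {L : MultLattice} (p : L) : Prop :=
  p <> top L /\ forall a b : L, le (mul a b) p -> le a p \/ le b p.

Definition S_prime {L : MultLattice} (S : L -> Prop) (p : L) : Prop :=
  p <> top L /\ (forall t, S t -> ~ le t p) /\
  exists s, S s /\ forall a b : L, le (mul a b) p -> le (mul s a) p \/ le (mul s b) p.

(* Main.v *)
Require Import Defs.
From Stdlib Require Import List Classical.
Import ListNotations.

Section H.
Variable L : MultLattice.

Lemma mono_r (a b c : L) : le a b -> le (mul c a) (mul c b).
Proof.
  intro Hab.
  assert (E : sup (fun y => y = a \/ y = b) = b).
  { apply le_antisym.
    - apply sup_least. intros y [->| ->]; [exact Hab | apply le_refl].
    - apply sup_ub. now right. }
  rewrite <- E, mul_sup. apply sup_ub. exists a. split; [now left | reflexivity].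
Qed.

Lemma mul_le (t p : L) : le (mul t p) p.
Proof.
  rewrite mulC. eapply le_trans. apply mono_r. apply (sup_ub _ (fun _ => True) t I).
  rewrite mulC, mul1. apply le_refl.
Qed.

Lemma list_prod (S : L -> Prop) (p : L) : S (top L) ->
  (forall s t, S s -> S t -> S (mul s t)) ->
  forall l : list L, (forall y, In y l -> exists s, S s /\ le (mul s y) p) ->
  exists t, S t /\ forall y, In y l -> le (mul t y) p.
Proof.
  intros Htop Hm l. induction l as [|y l IH]; intros Hl.
  - exists (top L). split; [exact Htop| intros y []].
  - destruct IH as [t [Ht Hty]]. { intros z Hz. apply Hl. now right. }
    destruct (Hl y (or_introl eq_refl)) as [s [Hs Hsy]].
    exists (mul s t). split; [now apply Hm|].
    intros z [<-|Hz].
    + rewrite (mulC _ s t), <- mulA. eapply le_trans; [apply mono_r, Hsy| apply mul_le].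
    + rewrite <- mulA. eapply le_trans; [apply mono_r, Hty, Hz| apply mul_le].
Qed.

Lemma compact_sat (S : L -> Prop) (p x : L) : S (top L) ->
  (forall s t, S s -> S t -> S (mul s t)) -> compact x ->
  le x (saturation S p) -> exists t, S t /\ le (mul t x) p.
Proof.
  intros Htop Hm Hc Hx. destruct (Hc _ Hx) as [l [Hl Hxl]].
  destruct (list_prod S p Htop Hm l Hl) as [t [Ht Htl]].
  exists t. split; [exact Ht|].
  eapply le_trans; [apply mono_r, Hxl|]. rewrite mul_sup.
  apply sup_least. intros y [z [Hz ->]]. now apply Htl.
Qed.
End H.

Theorem mainTheorem12 (L : MultLattice) (S : L -> Prop) (p : L) :
  c_lattice L -> mult_closed S -> S (top L) -> ~ S (bot L) ->
  S_prime S p -> prime (saturation S p).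
Proof.
  intros [Hcg [Htc Hcm]] [_ [_ Hm]] Htop _ [_ [HnS [s [Hs Hsp]]]].
  split.
  - intro E. destruct (compact_sat L S p (top L) Htop Hm Htc) as [t [Ht Htt]].
    { rewrite E. apply le_refl. }
    apply (HnS t Ht). rewrite mulC in Htt. unfold top in Htt. now rewrite mul1 in Htt.
  - intros a b Hab.
    destruct (classic (le a (saturation S p))) as [Ha|Ha]; [now left|].
    destruct (classic (le b (saturation S p))) as [Hb|Hb]; [now right|].
    exfalso.
    assert (Hex : forall c, ~ le c (saturation S p) ->
               exists x, compact x /\ le x c /\ ~ le x (saturation S p)).
    { intros c Hc. apply NNPP. intro Hn. apply Hc. rewrite (Hcg c).
      apply sup_least. intros x [Hx Hxc]. apply NNPP. intro Hn'.
      apply Hn. exists x. auto. }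
    destruct (Hex a Ha) as [x [Hx [Hxa Hxn]]].
    destruct (Hex b Hb) as [y [Hy [Hyb Hyn]]].
    assert (Hxy : le (mul x y) (saturation S p)).
    { eapply le_trans; [|exact Hab]. eapply le_trans. apply mono_r, Hyb.
      rewrite (mulC _ x b), (mulC _ a b). apply mono_r, Hxa. }
    destruct (compact_sat L S p _ Htop Hm (Hcm x y Hx Hy) Hxy) as [u [Hu Hup]].
    rewrite mulA in Hup.
    destruct (Hsp _ _ Hup) as [H1|H1].
    + apply Hxn. apply sup_ub. exists (mul s u). split; [now apply Hm|].
      now rewrite <- mulA.
    + apply Hyn. apply sup_ub. exists s. auto.
Qed.
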